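(* Let $0<\epsilon\le 1$. Let $G$ and $H$ be connected graphs with positive edge resistances $\mathbf{r}_G$ and $\mathbf{r}_H$, and suppose there is a common set $V_{bdry}$ with $V_{bdry}\subseteq V(G)\cap V(H)$, $V_{bdry}\ne V(G)$, $V_{bdry}\neq V(H)$, such that the interior vertices are $V(G)\setminus V_{bdry}$ in $G$ and $V(H)\setminus V_{bdry}$ in $H$. Let $\mathbf{L}_{schur}(G)$ and $\mathbf{L}_{schur}(H)$ be the Schur complements onto $V_{bdry}$ of the Laplacians of $G$ and $H$, and assume $$\mathbf{L}_{schur}(G)\preceq(1+\epsilon)\,\mathbf{L}_{schur}(H).$$ Let $\mathbf{f}(G)$ be a flow on $G$ whose residual $\mathbf{d}(G)=\mathbf{B}_G^T\mathbf{f}(G)$ is zero on every vertex of $V(G)\setminus V_{bdry}$, and let $\mathbf{d}_{bdry}$ be its restriction to $V_{bdry}$. Then there is a flow $\mathbf{f}(H)$ on $H$ whose residual $\mathbf{B}_H^T\mathbf{f}(H)$ equals $\mathbf{d}_{bdry}$ on $V_{bdry}$ and is $0$ on every vertex of $V(H)\setminus V_{bdry}$, and which satisfies $$\mathcal{E}_{\mathbf{f}(H)}(\mathbf{r}_H)\le(1+3\epsilon)\,\mathcal{E}_{\mathbf{f}(G)}(\mathbf{r}_G).$$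
   Context: Edges of an undirected graph are oriented arbitrarily; the edge–vertex incidence matrix $\mathbf{B}$ has $\mathbf{B}(e,u)=-1$ if $u$ is the head of $e$, $1$ if $u$ is the tail of $e$, and $0$ otherwise. A flow is a vector $\mathbf{f}\in\mathbb{R}^E$, and its residual (demand it meets) is $\mathbf{B}^T\mathbf{f}$. Given positive resistances $\mathbf{r}$, the energy of $\mathbf{f}$ is $\mathcal{E}_{\mathbf{f}}(\mathbf{r})=\sum_e\mathbf{r}(e)\mathbf{f}(e)^2$, and the Laplacian is $\mathbf{L}=\mathbf{B}^T\mathbf{R}^{-1}\mathbf{B}$ with $\mathbf{R}=\mathrm{diag}(\mathbf{r})$ (edge weights $1/\mathbf{r}(e)$). Given a partition $V=V_{intr}\cup V_{bdry}$ (both nonempty), write $\mathbf{L}=\begin{pmatrix}\mathbf{L}_{intr}&\mathbf{L}_{mid}\\ \mathbf{L}_{mid}^T&\mathbf{L}_{bdry}\end{pmatrix}$ (rows/columns first $V_{intr}$ then $V_{bdry}$); for connected graphs $\mathbf{L}_{intr}$ is invertible and the Schur complement onto $V_{bdry}$ is $\mathbf{L}_{schur}=\mathbf{L}_{bdry}-\mathbf{L}_{mid}^T\mathbf{L}_{intr}^{-1}\mathbf{L}_{mid}$. $\mathbf{A}\preceq\mathbf{B}$ means $\mathbf{B}-\mathbf{A}$ is positive semidefinite. *)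

(* Defs.v *)
From HB Require Import structures.
From mathcomp Require Import all_boot all_order all_algebra.
Set Implicit Arguments. Unset Strict Implicit. Unset Printing Implicit Defensive.
Import Order.TTheory GRing.Theory Num.Theory.
Local Open Scope ring_scope.

(* Vertices are laid out as 'I_(ni + nb): the first ni
   are interior, the last nb are boundary (the common V_bdry). *)

Definition incidence (R : pzRingType) (m n : nat) (hd tl : 'I_m -> 'I_n)
  : 'M[R]_(m, n) :=
  \matrix_(e < m, u < n) ((tl e == u)%:R - (hd e == u)%:R).

Definition adj (m n : nat) (hd tl : 'I_m -> 'I_n) : rel 'I_n :=
  fun u v => [exists e : 'I_m,
     ((hd e == u) && (tl e == v)) || ((tl e == u) && (hd e == v))].

Definition connected_graph (m n : nat) (hd tl : 'I_m -> 'I_n) : Prop :=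
  forall u v : 'I_n, connect (adj hd tl) u v.

Definition laplacian (R : fieldType) (m n : nat) (hd tl : 'I_m -> 'I_n)
  (r : 'I_m -> R) : 'M[R]_n :=
  (incidence R hd tl)^T *m diag_mx (\row_e (r e)^-1) *m incidence R hd tl.

Definition schur (R : fieldType) {ni nb : nat} (L : 'M[R]_(ni + nb))
  : 'M[R]_nb :=
  drsubmx L - (ursubmx L) ^T *m invmx (ulsubmx L) *m ursubmx L.

Definition psd (R : numDomainType) (n : nat) (M : 'M[R]_n) : Prop :=
  forall x : 'cV[R]_n, 0 <= (x^T *m M *m x) ord0 ord0.

Definition loewner_le (R : numDomainType) (n : nat) (A B : 'M[R]_n) : Prop :=
  psd (B - A).

Definition energy (R : pzRingType) (m : nat) (r : 'I_m -> R) (f : 'cV[R]_m) : R :=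
  \sum_(e < m) r e * f e ord0 ^+ 2.

Definition residual (R : pzRingType) (m n : nat) (hd tl : 'I_m -> 'I_n)
  (f : 'cV[R]_m) : 'cV[R]_n := (incidence R hd tl)^T *m f.

(* Main.v *)
Require Import Defs.
From HB Require Import structures.
From mathcomp Require Import all_boot all_order all_algebra.
From mathcomp Require Import ring lra zify.
Set Implicit Arguments. Unset Strict Implicit. Unset Printing Implicit Defensive.
Import Order.TTheory GRing.Theory Num.Theory.
Local Open Scope ring_scope.

Section Gen.
Variable (R : realFieldType) (m n : nat) (hd tl : 'I_m -> 'I_n) (r : 'I_m -> R).
Hypothesis rpos : forall e, 0 < r e.

Local Notation B := (incidence R hd tl).
Local Notation L := (laplacian hd tl r).

Lemma incE (x : 'cV[R]_n) e : (B *m x) e ord0 = x (tl e) ord0 - x (hd e) ord0.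
Proof.
rewrite !mxE.
under eq_bigr => u _ do rewrite !mxE mulrBl.
rewrite sumrB; congr (_ - _).
  rewrite (bigD1 (tl e)) //= eqxx mul1r big1 ?addr0 // => u /negPf.
  by rewrite eq_sym => ->; rewrite mul0r.
rewrite (bigD1 (hd e)) //= eqxx mul1r big1 ?addr0 // => u /negPf.
by rewrite eq_sym => ->; rewrite mul0r.
Qed.

Lemma lap_sym : L^T = L.
Proof. by rewrite /laplacian !trmx_mul trmxK tr_diag_mx mulmxA. Qed.

Lemma quad_lap (x : 'cV[R]_n) :
  (x^T *m L *m x) ord0 ord0 = \sum_e ((B *m x) e ord0) ^+ 2 / r e.
Proof.
rewrite /laplacian -!mulmxA mulmxA -trmx_mul.
set y := B *m x.
rewrite mulmxA mul_mx_diag mxE; apply: eq_bigr => e _.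
by rewrite !mxE expr2 mulrC mulrA.
Qed.

Lemma dot_res (x : 'cV[R]_n) (f : 'cV[R]_m) :
  (x^T *m residual hd tl f) ord0 ord0 = \sum_e (B *m x) e ord0 * f e ord0.
Proof.
rewrite /residual mulmxA -trmx_mul mxE; apply: eq_bigr => e _.
by rewrite mxE.
Qed.

Lemma energy_ge0 (f : 'cV[R]_m) : 0 <= energy r f.
Proof.
by apply: sumr_ge0 => e _; rewrite mulr_ge0 ?sqr_ge0 // ltW.
Qed.

Lemma thomson (c : R) (x : 'cV[R]_n) (f : 'cV[R]_m) :
  2 * c * (x^T *m residual hd tl f) ord0 ord0 - c ^+ 2 * (x^T *m L *m x) ord0 ord0
  <= energy r f.
Proof.
rewrite dot_res quad_lap !mulr_sumr -sumrB; apply: ler_sum => e _.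
set y := (B *m x) e ord0; set z := f e ord0.
have re := rpos e; have rne : r e != 0 by rewrite gt_eqF.
set w := c * y / r e.
have -> : 2 * c * (y * z) - c ^+ 2 * (y ^+ 2 / r e) = r e * (2 * w * z - w ^+ 2).
  by rewrite /w; field.
rewrite -subr_ge0 -mulrBr mulr_ge0 ?(ltW re) //.
have -> : z ^+ 2 - (2 * w * z - w ^+ 2) = (z - w) ^+ 2 by ring.
exact: sqr_ge0.
Qed.

Lemma quad0_const (x : 'cV[R]_n) :
  connected_graph hd tl ->
  (x^T *m L *m x) ord0 ord0 = 0 -> forall u v, x u ord0 = x v ord0.
Proof.
move=> conn; rewrite quad_lap => H0.
have H : forall e, true -> ((incidence R hd tl *m x) e ord0) ^+ 2 / r e = 0.
  by apply: (psumr_eq0P _ H0) => e _; rewrite divr_ge0 ?sqr_ge0 ?(ltW (rpos e)).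
have Ee : forall e, x (tl e) ord0 = x (hd e) ord0.
  move=> e; have /eqP := H e isT.
  rewrite mulf_eq0 invr_eq0 (gt_eqF (rpos e)) orbF sqrf_eq0 incE subr_eq0.
  by move/eqP.
move=> u v; apply/eqP.
have cl : closed (adj hd tl) [pred w | x w ord0 == x u ord0].
  move=> a b /existsP[e /orP[/andP[/eqP<- /eqP<-]|/andP[/eqP<- /eqP<-]]];
  by rewrite !inE Ee.
have h := closed_connect cl (conn u v); rewrite !inE eqxx in h.
by rewrite eq_sym -h.
Qed.

End Gen.

Section Block.
Variable (R : realFieldType) (m ni nb : nat) (hd tl : 'I_m -> 'I_(ni + nb)) (r : 'I_m -> R).
Hypothesis rpos : forall e, 0 < r e.
Hypothesis conn : connected_graph hd tl.
Hypothesis nbpos : (0 < nb)%N.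

Local Notation L := (laplacian hd tl r).

Lemma dl_eq : dlsubmx L = (ursubmx L)^T.
Proof. by rewrite trmx_ursub lap_sym. Qed.

Lemma ul_sym : (ulsubmx L)^T = ulsubmx L.
Proof. by rewrite trmx_ulsub lap_sym. Qed.

Lemma kerLi (u : 'rV[R]_ni) : u *m ulsubmx L = 0 -> u = 0.
Proof.
move=> uL.
set x := col_mx u^T (0 : 'cV[R]_nb).
have q0 : (x^T *m L *m x) ord0 ord0 = 0.
  rewrite /x tr_col_mx trmxK trmx0 -mulmxA -[laplacian hd tl r]submxK.
  rewrite mul_block_col mul_row_col !mulmx0 !addr0 mul0mx addr0.
  have -> : ulsubmx L *m u^T = 0 by rewrite -ul_sym -trmx_mul uL trmx0.
  by rewrite mulmx0 mxE.
have c := quad0_const rpos conn q0.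
apply/rowP => j; rewrite mxE.
have -> : u ord0 j = x (lshift nb j) ord0 by rewrite /x col_mxEu mxE.
by rewrite (c _ (rshift ni (Ordinal nbpos))) /x col_mxEd mxE.
Qed.

Lemma Li_unit : ulsubmx L \in unitmx.
Proof.
rewrite -row_free_unit -kermx_eq0 -submx0; apply/row_subP => i.
rewrite submx0; apply/eqP; apply: kerLi.
by rewrite -row_mul mulmx_ker row0.
Qed.

Definition harm (psi : 'cV[R]_nb) : 'cV[R]_(ni + nb) :=
  col_mx (- (invmx (ulsubmx L) *m ursubmx L *m psi)) psi.

Lemma harmE psi : L *m harm psi = col_mx 0 (schur L *m psi).
Proof.
rewrite /harm -{1}[laplacian hd tl r]submxK mul_block_col.
rewrite !mulmxN -!mulmxA (mulmxA (ulsubmx L)) mulmxV ?Li_unit // mul1mx addNr.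
rewrite dl_eq /schur mulmxBl addrC; congr (col_mx _ (_ + _)).
by rewrite !mulmxA.
Qed.

Lemma dot_col (a : 'cV[R]_ni) (psi d : 'cV[R]_nb) :
  (col_mx a psi)^T *m col_mx 0 d = psi^T *m d.
Proof. by rewrite tr_col_mx mul_row_col mulmx0 add0r. Qed.

Lemma quad_harm psi :
  (harm psi)^T *m L *m harm psi = psi^T *m schur L *m psi.
Proof. by rewrite -mulmxA harmE /harm dot_col mulmxA. Qed.

Lemma schur_solve (phi : 'cV[R]_(ni + nb)) (d : 'cV[R]_nb) :
  L *m phi = col_mx 0 d -> schur L *m dsubmx phi = d.
Proof.
rewrite -{1}[phi]vsubmxK -{1}[laplacian hd tl r]submxK mul_block_col.
move=> /eq_col_mx [h1 h2].
have hu : usubmx phi = - (invmx (ulsubmx L) *m ursubmx L *m dsubmx phi).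
  apply/eqP; rewrite -subr_eq0 opprK; apply/eqP.
  rewrite -[usubmx phi](mulKmx Li_unit) -!mulmxA -mulmxDr.
  by rewrite h1 mulmx0.
rewrite -h2 hu /schur dl_eq mulmxBl addrC mulmxN !mulmxA.
by rewrite -mulmxA.
Qed.

End Block.

Section Solve.
Variable (R : realFieldType) (m n : nat) (hd tl : 'I_m -> 'I_n) (r : 'I_m -> R).
Hypothesis rpos : forall e, 0 < r e.
Hypothesis conn : connected_graph hd tl.
Hypothesis npos : (0 < n)%N.

Local Notation L := (laplacian hd tl r).

Lemma B_ones : incidence R hd tl *m (const_mx 1 : 'cV[R]_n) = 0.
Proof. by apply/colP => e; rewrite incE !mxE subrr. Qed.

Lemma L_ones : L *m (const_mx 1 : 'cV[R]_n) = 0.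
Proof. by rewrite /laplacian -(mulmxA _ (incidence R hd tl)) B_ones mulmx0. Qed.

Lemma kerL (u : 'rV[R]_n) : u *m L = 0 -> u = u ord0 (Ordinal npos) *: const_mx 1.
Proof.
move=> uL.
have Lx : L *m u^T = 0 by rewrite -lap_sym -trmx_mul uL trmx0.
have q0 : ((u^T)^T *m L *m u^T) ord0 ord0 = 0 by rewrite -mulmxA Lx mulmx0 mxE.
have c := quad0_const rpos conn q0.
apply/rowP => j; rewrite !mxE mulr1.
by have := c j (Ordinal npos); rewrite !mxE.
Qed.

Lemma solve_lap (D : 'cV[R]_n) : D^T *m (const_mx 1 : 'cV[R]_n) = 0 -> exists phi, L *m phi = D.
Proof.
move=> D1.
set oc := (const_mx 1 : 'cV[R]_n).
have sK : (kermx L <= (const_mx 1 : 'rV[R]_n))%MS.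
  apply/row_subP => i; rewrite (kerL (u := row i (kermx L))).
    by rewrite scalemx_sub.
  by rewrite -row_mul mulmx_ker row0.
have rk1 : (\rank (kermx L) <= 1)%N.
  exact: leq_trans (mxrankS sK) (rank_leq_row _).
rewrite mxrank_ker in rk1.
have sLK : (L <= kermx oc)%MS by rewrite sub_kermx L_ones.
have rkoc : \rank oc = 1%N.
  apply/eqP; rewrite eqn_leq rank_leq_col /= lt0n mxrank_eq0.
  apply/eqP => /colP /(_ (Ordinal npos)); rewrite !mxE => /eqP.
  by rewrite oner_eq0.
have rkK : \rank (kermx oc) = (n - 1)%N by rewrite mxrank_ker rkoc.
have sKL : (kermx oc <= L)%MS.
  rewrite -(mxrank_leqif_sup sLK).2 eqn_leq mxrankS //= rkK.
  have := rank_leq_row L; lia.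
have : (D^T <= L)%MS by apply: submx_trans sKL; rewrite sub_kermx D1.
case/submxP => E hE; exists E^T.
by rewrite -lap_sym -trmx_mul -hE trmxK.
Qed.

End Solve.

Theorem mainTheorem8 (R : realFieldType) (eps : R)
  (nb niG niH mG mH : nat)
  (hdG tlG : 'I_mG -> 'I_(niG + nb)) (rG : 'I_mG -> R)
  (hdH tlH : 'I_mH -> 'I_(niH + nb)) (rH : 'I_mH -> R) :
  0 < eps -> eps <= 1 ->
  (0 < nb)%N -> (0 < niG)%N -> (0 < niH)%N ->
  connected_graph hdG tlG -> connected_graph hdH tlH ->
  (forall e, 0 < rG e) -> (forall e, 0 < rH e) ->
  loewner_le (schur (laplacian hdG tlG rG))
             ((1 + eps) *: schur (laplacian hdH tlH rH)) ->
  forall fG : 'cV[R]_mG,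
    usubmx (residual hdG tlG fG) = 0 ->
    exists fH : 'cV[R]_mH,
      [/\ usubmx (residual hdH tlH fH) = 0,
          dsubmx (residual hdH tlH fH) = dsubmx (residual hdG tlG fG) &
          energy rH fH <= (1 + 3 * eps) * energy rG fG].
Proof.
move=> eps0 eps1 nb0 niG0 niH0 cG cH rGp rHp lw fG uG.
set resG := residual hdG tlG fG.
set d := dsubmx resG.
have resGE : resG = col_mx 0 d by rewrite -[resG]vsubmxK uG.
have sumG : resG^T *m (const_mx 1 : 'cV[R]_(niG + nb)) = 0.
  by rewrite /resG /residual trmx_mul trmxK -mulmxA B_ones mulmx0.
have sumd : d^T *m (const_mx 1 : 'cV[R]_nb) = 0.
  by move: sumG; rewrite resGE -col_mx_const tr_col_mx mul_row_col trmx0 mul0mx add0r.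
set D := col_mx (0 : 'cV[R]_niH) d.
have sumD : D^T *m (const_mx 1 : 'cV[R]_(niH + nb)) = 0.
  by rewrite /D -col_mx_const tr_col_mx mul_row_col trmx0 mul0mx add0r.
have nH : (0 < niH + nb)%N by rewrite addn_gt0 niH0.
have [phi hphi] := solve_lap rHp cH nH sumD.
set fH := diag_mx (\row_e (rH e)^-1) *m (incidence R hdH tlH *m phi).
have resH : residual hdH tlH fH = D.
  by rewrite /residual /fH -hphi /laplacian !mulmxA.
set psi := dsubmx phi.
set a := (psi^T *m d) ord0 ord0.
have EH : energy rH fH = a.
  have -> : a = (phi^T *m laplacian hdH tlH rH *m phi) ord0 ord0.
    by rewrite -mulmxA hphi -[phi]vsubmxK /D dot_col.
  rewrite quad_lap // /energy; apply: eq_bigr => e _.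
  rewrite /fH mul_diag_mx !mxE.
  have := rHp e => he.
  by field; rewrite gt_eqF.
have SH : schur (laplacian hdH tlH rH) *m psi = d by apply: schur_solve.
set phiG := harm hdG tlG rG psi.
have dotG : (phiG^T *m resG) ord0 ord0 = a by rewrite resGE /phiG /harm dot_col.
set q := (psi^T *m schur (laplacian hdG tlG rG) *m psi) ord0 ord0.
have qG : (phiG^T *m laplacian hdG tlG rG *m phiG) ord0 ord0 = q.
  by rewrite /phiG quad_harm.
have Lw : 0 <= (1 + eps) * a - q.
  have := lw psi.
  rewrite mulmxBr mulmxBl -scalemxAr -scalemxAl.
  rewrite -(mulmxA psi^T) SH.
  have E1 : forall (k0 : R) (A B : 'M[R]_1), (k0 *: A - B) ord0 ord0 = k0 * A ord0 ord0 - B ord0 ord0.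
    by move=> k0 A B; rewrite !mxE.
  by rewrite E1.
have T := thomson hdG tlG rGp ((1 + eps)^-1) phiG fG.
rewrite dotG qG in T.
have EG := energy_ge0 rGp fG.
have a0 : 0 <= a by rewrite -EH energy_ge0.
exists fH; split.
- by rewrite resH /D col_mxKu.
- by rewrite resH /D col_mxKd.
rewrite EH.
set k := 1 + eps.
have k0 : 0 < k by rewrite /k; lra.
set c := k^-1.
have ck : c * k = 1 by rewrite /c mulVf // gt_eqF.
set EGv := energy rG fG.
have T2 : 2 * a * k - q <= k ^+ 2 * EGv.
  have := ler_wpM2l (ltW (mulr_gt0 k0 k0)) T.
  have -> : k * k * (2 * c * a - c ^+ 2 * q) = 2 * a * (c * k) * k - (c * k) ^+ 2 * q by ring.
  by rewrite ck expr1n mulr1 mul1r expr2.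
rewrite -/k in Lw.
have h : a * k <= k * k * EGv.
  move: T2 Lw; rewrite expr2 (mulrC k a); lra.
have ak : a <= k * EGv.
  nra.

have : k * EGv <= (1 + 3 * eps) * EGv.
  by rewrite ler_wpM2r // /k; lra.
exact: le_trans.
Qed.
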